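(* There is an evolution system $v^1_t=R^1$, $v^2_t=R^2$ (with $R^i$ depending on $v^1,v^2$ and finitely many of their $x$-derivatives) such that whenever $(v^1,v^2)$ satisfies it, the functions $$u^1=v^1_2+(v^1_1)^2+\bigl(v^2_1+v^1_1v^2-\mathrm{e}^{-3v^1}\bigr)^2,\qquad u^2=v^2_1+v^1_1v^2-\mathrm{e}^{-3v^1}$$ satisfy the Kersten–Krasilshchik system $$u^1_t=-u^1_3+6u^1u^1_1-3u^2u^2_3-3u^2_1u^2_2+3u^1_1(u^2)^2+6u^1u^2u^2_1,\qquad u^2_t=-u^2_3+3(u^2)^2u^2_1+3u^1u^2_1+3u^1_1u^2.$$
   Context: $u^i_j=\partial^ju^i/\partial x^j$, $v^i_j=\partial^jv^i/\partial x^j$. Complex-analytic, local considerations. *)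

(* Defs.v *)
From Stdlib Require Import Reals.
From Coquelicot Require Import Coquelicot.

Open Scope C_scope.

Definition cexp (z : C) : C :=
  ((exp (fst z) * cos (snd z))%R, (exp (fst z) * sin (snd z))%R).

Definition is_pdx (U : C -> C -> Prop) (f g : C -> C -> C) : Prop :=
  forall t x, U t x -> is_derive (fun y => f t y) x (g t x).
Definition is_pdt (U : C -> C -> Prop) (f g : C -> C -> C) : Prop :=
  forall t x, U t x -> is_derive (fun s => f s x) t (g t x).

Definition open2 (U : C -> C -> Prop) : Prop :=
  forall t x, U t x -> exists eps : R, (0 < eps)%R /\
    forall t' x', (Cmod (t' - t) < eps)%R -> (Cmod (x' - x) < eps)%R -> U t' x'.

(** [F] is a family of all mixed partial derivatives on U:
    F a b = d^a/dt^a d^b/dx^b (F 0 0).  For an open U this says exactly that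
    F 0 0 is holomorphic on U (Hartogs) and lists its derivatives. *)
Definition deriv_family (U : C -> C -> Prop) (F : nat -> nat -> C -> C -> C) : Prop :=
  forall a b, is_pdx U (F a b) (F a (S b)) /\ is_pdt U (F a b) (F (S a) b).

(** Jets: the values v, v_1, v_2, ... of the x-derivatives of a function. *)
Definition jet := nat -> C.

Definition jet_at (F : nat -> nat -> C -> C -> C) (t x : C) : jet :=
  fun k => F O k t x.

Definition jupd (j : jet) (k : nat) (z : C) : jet :=
  fun i => if Nat.eqb i k then z else j i.

Definition depends_upto (N : nat) (R : jet -> jet -> C) : Prop :=
  forall j1 j2 k1 k2 : jet,
    (forall k, (k <= N)%nat -> j1 k = k1 k /\ j2 k = k2 k) -> R j1 j2 = R k1 k2.
Definition set_depends_upto (N : nat) (D : jet -> jet -> Prop) : Prop :=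
  forall j1 j2 k1 k2 : jet,
    (forall k, (k <= N)%nat -> j1 k = k1 k /\ j2 k = k2 k) -> (D j1 j2 <-> D k1 k2).

Definition jet_open (N : nat) (D : jet -> jet -> Prop) : Prop :=
  forall j1 j2, D j1 j2 -> exists eps : R, (0 < eps)%R /\
    forall k1 k2 : jet,
      (forall k, (k <= N)%nat -> (Cmod (k1 k - j1 k) < eps)%R /\
                                  (Cmod (k2 k - j2 k) < eps)%R) ->
      D k1 k2.

(** R is holomorphic on D (separately holomorphic in each of the finitely many
    jet coordinates, which on an open set is holomorphy by Hartogs). *)
Definition holo_on_jets (N : nat) (D : jet -> jet -> Prop) (R : jet -> jet -> C) : Prop :=
  forall j1 j2, D j1 j2 -> forall k, (k <= N)%nat ->
    ex_derive (fun z => R (jupd j1 k z) j2) (j1 k) /\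
    ex_derive (fun z => R j1 (jupd j2 k z)) (j2 k).

Definition evolution_system (N : nat) (D : jet -> jet -> Prop) (R1 R2 : jet -> jet -> C) : Prop :=
  depends_upto N R1 /\ depends_upto N R2 /\ set_depends_upto N D /\
  jet_open N D /\ (exists j1 j2, D j1 j2) /\
  holo_on_jets N D R1 /\ holo_on_jets N D R2.

Definition is_solution (D : jet -> jet -> Prop) (R1 R2 : jet -> jet -> C)
    (U : C -> C -> Prop) (V1 V2 : nat -> nat -> C -> C -> C) : Prop :=
  open2 U /\ deriv_family U V1 /\ deriv_family U V2 /\
  forall t x, U t x ->
    D (jet_at V1 t x) (jet_at V2 t x) /\
    V1 1%nat O t x = R1 (jet_at V1 t x) (jet_at V2 t x) /\
    V2 1%nat O t x = R2 (jet_at V1 t x) (jet_at V2 t x).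

Definition miura_u2 (V1 V2 : nat -> nat -> C -> C -> C) (t x : C) : C :=
  V2 O 1%nat t x + V1 O 1%nat t x * V2 O O t x - cexp (- (RtoC 3) * V1 O O t x).
Definition miura_u1 (V1 V2 : nat -> nat -> C -> C -> C) (t x : C) : C :=
  V1 O 2%nat t x + V1 O 1%nat t x * V1 O 1%nat t x
  + miura_u2 V1 V2 t x * miura_u2 V1 V2 t x.

Definition KK_solution (U : C -> C -> Prop) (u1 u2 : C -> C -> C) : Prop :=
  exists W1 W2 : nat -> nat -> C -> C -> C,
    deriv_family U W1 /\ deriv_family U W2 /\
    (forall t x, W1 O O t x = u1 t x /\ W2 O O t x = u2 t x) /\
    forall t x, U t x ->
      let a := W1 O O t x in let a1 := W1 O 1%nat t x in
      let a3 := W1 O 3%nat t x in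
      let b := W2 O O t x in let b1 := W2 O 1%nat t x in
      let b2 := W2 O 2%nat t x in let b3 := W2 O 3%nat t x in
      W1 1%nat O t x =
        - a3 + RtoC 6 * a * a1 - RtoC 3 * b * b3 - RtoC 3 * b1 * b2
        + RtoC 3 * a1 * (b * b) + RtoC 6 * a * b * b1 /\
      W2 1%nat O t x =
        - b3 + RtoC 3 * (b * b) * b1 + RtoC 3 * a * b1 + RtoC 3 * a1 * b.

(* Main.v *)
Require Import Defs.
From Stdlib Require Import Reals Lra Lia FunctionalExtensionality.
From Coquelicot Require Import Coquelicot.
Open Scope R_scope.

Lemma MV0 (f f' : R -> R) (x : R) :
  (forall c, derivable_pt_lim f c (f' c)) ->
  exists c, Rabs c <= Rabs x /\ f x - f 0 = f' c * x.
Proof.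
  intros H.
  destruct (Rtotal_order x 0) as [Hx|[Hx|Hx]].
  - destruct (MVT_cor2 f f' x 0 Hx (fun c _ => H c)) as [c [E Hc]].
    exists c. split. rewrite !Rabs_left by lra. lra. lra.
  - subst. exists 0. split. lra. ring.
  - destruct (MVT_cor2 f f' 0 x Hx (fun c _ => H c)) as [c [E Hc]].
    exists c. split. rewrite !Rabs_right by lra. lra. lra.
Qed.

Lemma sin_abs (x : R) : Rabs (sin x) <= Rabs x.
Proof.
  destruct (MV0 sin cos x derivable_pt_lim_sin) as [c [_ E]].
  rewrite sin_0 in E. replace (sin x) with (cos c * x) by lra.
  rewrite Rabs_mult. pose proof (COS_bound c). 
  assert (Rabs (cos c) <= 1) by (apply Rabs_le; apply COS_bound).
  pose proof (Rabs_pos x). nra.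
Qed.

Lemma cos_m1 (x : R) : Rabs (cos x - 1) <= x * x.
Proof.
  destruct (MV0 cos (fun c => - sin c) x derivable_pt_lim_cos) as [c [Hc E]].
  rewrite cos_0 in E. rewrite E. rewrite Rabs_mult, Rabs_Ropp.
  pose proof (sin_abs c). pose proof (Rabs_pos x). pose proof (Rabs_pos c).
  replace (x*x) with (Rabs x * Rabs x) by (rewrite <- Rabs_mult; apply Rabs_right; nra).
  nra.
Qed.

Lemma sin_m (x : R) : Rabs x <= 1 -> Rabs (sin x - x) <= x * x.
Proof.
  intros Hx.
  destruct (MV0 (fun y => sin y - y) (fun c => cos c - 1) x) as [c [Hc E]].
  { intros c. apply derivable_pt_lim_minus. apply derivable_pt_lim_sin. apply derivable_pt_lim_id. }
  rewrite sin_0 in E. replace (sin x - x) with ((cos c - 1) * x) by lra.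
  rewrite Rabs_mult. pose proof (cos_m1 c). pose proof (Rabs_pos x). pose proof (Rabs_pos c).
  replace (x*x) with (Rabs x * Rabs x) by (rewrite <- Rabs_mult; apply Rabs_right; nra).
  assert (c * c <= Rabs x) .
  { replace (c*c) with (Rabs c * Rabs c) by (rewrite <- Rabs_mult; apply Rabs_right; nra). nra. }
  nra.
Qed.

Lemma exp_small (a : R) : Rabs a <= 1 -> exp a <= 3.
Proof.
  intros H. pose proof exp_le_3. assert (a <= 1) by (pose proof (Rle_abs a); lra).
  destruct (Req_dec a 1). subst; lra. pose proof (exp_increasing a 1). lra.
Qed.

Lemma exp_m1 (a : R) : Rabs a <= 1 -> Rabs (exp a - 1) <= 3 * Rabs a.
Proof.
  intros Ha.
  destruct (MV0 exp exp a derivable_pt_lim_exp) as [c [Hc E]].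
  rewrite exp_0 in E. rewrite E, Rabs_mult.
  pose proof (exp_small c ltac:(lra)). pose proof (exp_pos c).
  rewrite (Rabs_right (exp c)) by lra. pose proof (Rabs_pos a). nra.
Qed.

Lemma exp_m2 (a : R) : Rabs a <= 1 -> Rabs (exp a - 1 - a) <= 3 * (a * a).
Proof.
  intros Ha.
  destruct (MV0 (fun y => exp y - y) (fun c => exp c - 1) a) as [c [Hc E]].
  { intros c. apply derivable_pt_lim_minus. apply derivable_pt_lim_exp. apply derivable_pt_lim_id. }
  rewrite exp_0 in E. replace (exp a - 1 - a) with ((exp c - 1) * a) by lra.
  rewrite Rabs_mult. pose proof (exp_m1 c ltac:(lra)). pose proof (Rabs_pos a). pose proof (Rabs_pos c).
  replace (a*a) with (Rabs a * Rabs a) by (rewrite <- Rabs_mult; apply Rabs_right; nra).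
  nra.
Qed.

Lemma Cmod_le_sum (a b : R) : Cmod (a, b) <= Rabs a + Rabs b.
Proof.
  unfold Cmod; simpl.
  rewrite <- (sqrt_Rsqr (Rabs a + Rabs b)) by (pose proof (Rabs_pos a); pose proof (Rabs_pos b); lra).
  apply sqrt_le_1_alt. unfold Rsqr.
  pose proof (Rabs_pos a); pose proof (Rabs_pos b).
  replace (a*(a*1)) with (Rabs a * Rabs a) by (rewrite <- Rabs_mult; rewrite Rabs_right; nra).
  replace (b*(b*1)) with (Rabs b * Rabs b) by (rewrite <- Rabs_mult; rewrite Rabs_right; nra).
  nra.
Qed.

Lemma cexp_plus (z h : C) : cexp (z + h) = (cexp z * cexp h)%C.
Proof.
  destruct z as [x y], h as [a b]. unfold cexp; simpl.
  rewrite exp_plus, cos_plus, sin_plus.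
  apply injective_projections; simpl; ring.
Qed.

Lemma cexp_0 : cexp 0 = 1%C.
Proof. unfold cexp; simpl. rewrite exp_0, cos_0, sin_0. apply injective_projections; simpl; ring. Qed.

Lemma cexp_quad (h : C) : Cmod h <= 1 -> Cmod (cexp h - 1 - h)%C <= 12 * (Cmod h * Cmod h).
Proof.
  destruct h as [a b]. intros Hh.
  assert (Ha : Rabs a <= Cmod (a,b)) by apply (re_le_Cmod (a,b)).
  assert (Hb : Rabs b <= Cmod (a,b)).
  { pose proof (Rmax_Cmod (a,b)). simpl in H. pose proof (Rmax_r (Rabs a) (Rabs b)). lra. }
  set (m := Cmod (a,b)) in *.
  replace (cexp (a, b) - 1 - (a, b))%C with
    ((((exp a * (cos b - 1)) + (exp a - 1 - a)), (exp a * (sin b - b) + (exp a - 1) * b))%R : C).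
  2:{ unfold cexp, Cminus, Cplus, Copp; simpl. apply injective_projections; simpl; ring. }
  eapply Rle_trans. apply Cmod_le_sum.
  pose proof (exp_pos a). pose proof (exp_small a ltac:(lra)).
  pose proof (cos_m1 b). pose proof (sin_m b ltac:(lra)). pose proof (exp_m2 a ltac:(lra)).
  pose proof (exp_m1 a ltac:(lra)).
  pose proof (Rabs_pos a). pose proof (Rabs_pos b).
  assert (a*a <= m*m) by (replace (a*a) with (Rabs a * Rabs a) by (rewrite <- Rabs_mult; apply Rabs_right; nra); nra).
  assert (b*b <= m*m) by (replace (b*b) with (Rabs b * Rabs b) by (rewrite <- Rabs_mult; apply Rabs_right; nra); nra).
  pose proof (Rabs_triang (exp a * (cos b - 1)) (exp a - 1 - a)).
  pose proof (Rabs_triang (exp a * (sin b - b)) ((exp a - 1) * b)).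
  rewrite !Rabs_mult in *. rewrite (Rabs_right (exp a)) in * by lra.
  assert (exp a * Rabs (cos b - 1) <= 3 * (m*m)) by nra.
  assert (exp a * Rabs (sin b - b) <= 3 * (m*m)) by nra.
  assert (Rabs (exp a - 1) * Rabs b <= 3 * (m*m)) by nra.
  lra.
Qed.

Lemma is_derive_cexp (z : C) : is_derive cexp z (cexp z).
Proof.
  split. apply is_linear_scal_l.
  intros x Hx. apply (@is_filter_lim_locally_unique C_AbsRing (AbsRing_NormedModule C_AbsRing)) in Hx. subst x.
  intros eps. apply (@locally_le_locally_norm C_AbsRing (AbsRing_NormedModule C_AbsRing)).
  assert (Hc : 0 <= Cmod (cexp z)) by apply Cmod_ge_0.
  assert (Hd : 0 < Rmin 1 (eps / (12 * (Cmod (cexp z) + 1)))).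
  { apply Rmin_pos. lra. apply Rdiv_lt_0_compat. apply cond_pos. lra. }
  exists (mkposreal _ Hd). intros y Hy. unfold ball_norm in Hy. simpl in Hy.
  change (norm (minus y z)) with (Cmod (y - z)%C) in *.
  change (norm ?u) with (Cmod u).
  change (minus (minus (cexp y) (cexp z)) (scal (minus y z) (cexp z))) with
    ((cexp y - cexp z) - (y - z) * cexp z)%C.
  set (h := (y - z)%C) in *.
  replace y with (z + h)%C by (unfold h; ring).
  rewrite cexp_plus.
  replace (cexp z * cexp h - cexp z - h * cexp z)%C with (cexp z * (cexp h - 1 - h))%C by ring.
  rewrite Cmod_mult.
  pose proof (Rmin_l 1 (eps / (12 * (Cmod (cexp z) + 1)))).
  pose proof (Rmin_r 1 (eps / (12 * (Cmod (cexp z) + 1)))).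
  pose proof (cexp_quad h ltac:(lra)).
  pose proof (Cmod_ge_0 h). pose proof (cond_pos eps).
  assert (Cmod h * (12 * (Cmod (cexp z) + 1)) <= eps).
  { assert (Hh : Cmod h <= eps / (12 * (Cmod (cexp z) + 1))) by lra.
    apply (Rmult_le_compat_r (12 * (Cmod (cexp z) + 1))) in Hh; [|lra].
    unfold Rdiv in Hh. rewrite Rmult_assoc, Rinv_l in Hh by lra. lra. }
  apply Rle_trans with (Cmod (cexp z) * (12 * (Cmod h * Cmod h))).
  apply Rmult_le_compat_l; lra.
  nra.
Qed.

Open Scope C_scope.

Inductive ex : Type :=
| Cst (c : C) | A1 (a b : nat) | A2 (a b : nat) | Ex
| Add (e f : ex) | Sub (e f : ex) | Mul (e f : ex).

Fixpoint ev (g1 g2 : nat -> nat -> C) (e : ex) : C :=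
  match e with
  | Cst c => c
  | A1 a b => g1 a b
  | A2 a b => g2 a b
  | Ex => cexp (- (RtoC 3) * g1 O O)
  | Add e f => ev g1 g2 e + ev g1 g2 f
  | Sub e f => ev g1 g2 e - ev g1 g2 f
  | Mul e f => ev g1 g2 e * ev g1 g2 f
  end.

Fixpoint evd (g1 g2 d1 d2 : nat -> nat -> C) (e : ex) : C :=
  match e with
  | Cst c => 0
  | A1 a b => d1 a b
  | A2 a b => d2 a b
  | Ex => - (RtoC 3) * d1 O O * cexp (- (RtoC 3) * g1 O O)
  | Add e f => evd g1 g2 d1 d2 e + evd g1 g2 d1 d2 f
  | Sub e f => evd g1 g2 d1 d2 e - evd g1 g2 d1 d2 f
  | Mul e f => evd g1 g2 d1 d2 e * ev g1 g2 f + ev g1 g2 e * evd g1 g2 d1 d2 f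
  end.

Fixpoint dx (e : ex) : ex :=
  match e with
  | Cst c => Cst 0
  | A1 a b => A1 a (S b)
  | A2 a b => A2 a (S b)
  | Ex => Mul (Mul (Cst (- (RtoC 3))) (A1 O 1)) Ex
  | Add e f => Add (dx e) (dx f)
  | Sub e f => Sub (dx e) (dx f)
  | Mul e f => Add (Mul (dx e) f) (Mul e (dx f))
  end.

Fixpoint dt (e : ex) : ex :=
  match e with
  | Cst c => Cst 0
  | A1 a b => A1 (S a) b
  | A2 a b => A2 (S a) b
  | Ex => Mul (Mul (Cst (- (RtoC 3))) (A1 1 O)) Ex
  | Add e f => Add (dt e) (dt f)
  | Sub e f => Sub (dt e) (dt f)
  | Mul e f => Add (Mul (dt e) f) (Mul e (dt f))
  end.

Fixpoint dxn (n : nat) (e : ex) : ex :=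
  match n with O => e | S n => dx (dxn n e) end.
Fixpoint dtn (n : nat) (e : ex) : ex :=
  match n with O => e | S n => dt (dtn n e) end.

Lemma is_derive_eq {K : AbsRing} {V : NormedModule K} (f : K -> V) (x : K) (l l' : V) :
  is_derive f x l -> l = l' -> is_derive f x l'.
Proof. intros H ->; exact H. Qed.

Lemma is_derive_CK (f : C -> C) x l : @is_derive C_AbsRing C_NormedModule f x l -> @is_derive C_AbsRing (AbsRing_NormedModule C_AbsRing) f x l.
Proof. intros [Hl Hd]. split.
- destruct Hl as [H1 H2 [M HM]]. constructor. exact H1. exact H2. exists M. exact HM.
- intros y Hy eps. exact (Hd y Hy eps). Qed.
Lemma is_derive_KC (f : C -> C) x l : @is_derive C_AbsRing (AbsRing_NormedModule C_AbsRing) f x l -> @is_derive C_AbsRing C_NormedModule f x l.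
Proof. intros [Hl Hd]. split.
- destruct Hl as [H1 H2 [M HM]]. constructor. exact H1. exact H2. exists M. exact HM.
- intros y Hy eps. exact (Hd y Hy eps). Qed.

Lemma is_derive_mulC (f g : C -> C) (x df dg : C) :
  @is_derive C_AbsRing C_NormedModule f x df -> @is_derive C_AbsRing C_NormedModule g x dg ->
  @is_derive C_AbsRing C_NormedModule (fun s => f s * g s) x (df * g x + f x * dg).
Proof.
  intros Hf Hg. apply is_derive_KC.
  apply (is_derive_mult f g x df dg (is_derive_CK _ _ _ Hf) (is_derive_CK _ _ _ Hg)).
  intros; apply Cmult_comm.
Qed.

Lemma is_derive_idC (x : C) : @is_derive C_AbsRing C_NormedModule (fun s => s) x (RtoC 1).
Proof. apply is_derive_KC. apply (is_derive_id (K:=C_AbsRing)). Qed.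

Lemma is_derive_constC (c x : C) : @is_derive C_AbsRing C_NormedModule (fun _ => c) x (RtoC 0).
Proof. apply (is_derive_const (K:=C_AbsRing) (V:=C_NormedModule)). Qed.

Lemma is_derive_cexp_comp (g : C -> C) (x dg : C) :
  @is_derive C_AbsRing C_NormedModule g x dg ->
  @is_derive C_AbsRing C_NormedModule (fun s => cexp (g s)) x (dg * cexp (g x)).
Proof.
  intros Hg. apply (is_derive_comp cexp g x (cexp (g x)) dg).
  apply is_derive_cexp. apply is_derive_CK, Hg.
Qed.

Lemma ev_deriv (e : ex) (G1 G2 : C -> nat -> nat -> C) (D1 D2 : nat -> nat -> C) (s0 : C) :
  (forall a b, is_derive (fun s => G1 s a b) s0 (D1 a b)) ->
  (forall a b, is_derive (fun s => G2 s a b) s0 (D2 a b)) ->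
  is_derive (fun s => ev (G1 s) (G2 s) e) s0 (evd (G1 s0) (G2 s0) D1 D2 e).
Proof.
  intros H1 H2. induction e; simpl.
  - apply is_derive_constC.
  - apply H1.
  - apply H2.
  - eapply is_derive_eq.
    apply (is_derive_cexp_comp (fun s => - RtoC 3 * G1 s O O)).
    apply (is_derive_mulC (fun _ => - RtoC 3) (fun s => G1 s O O)).
    apply is_derive_constC. apply H1.
    simpl. ring.
  - eapply is_derive_eq. apply (is_derive_plus _ _ _ _ _ IHe1 IHe2). reflexivity.
  - eapply is_derive_eq. apply (is_derive_minus _ _ _ _ _ IHe1 IHe2). reflexivity.
  - apply (is_derive_mulC _ _ _ _ _ IHe1 IHe2).
Qed.

Lemma ev_dx (e : ex) g1 g2 :
  ev g1 g2 (dx e) = evd g1 g2 (fun a b => g1 a (S b)) (fun a b => g2 a (S b)) e.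
Proof. induction e; simpl; try rewrite IHe1, IHe2; try reflexivity. Qed.

Lemma ev_dt (e : ex) g1 g2 :
  ev g1 g2 (dt e) = evd g1 g2 (fun a b => g1 (S a) b) (fun a b => g2 (S a) b) e.
Proof. induction e; simpl; try rewrite IHe1, IHe2; try reflexivity. Qed.

Definition eqv (e f : ex) : Prop := forall g1 g2, ev g1 g2 e = ev g1 g2 f.

Lemma eqv_evd (e f : ex) : eqv e f -> forall g1 g2 d1 d2,
  evd g1 g2 d1 d2 e = evd g1 g2 d1 d2 f.
Proof.
  intros H g1 g2 d1 d2.
  set (G1 := fun (s : C) a b => g1 a b + s * d1 a b).
  set (G2 := fun (s : C) a b => g2 a b + s * d2 a b).
  assert (HG : forall (g d : nat -> nat -> C) a b,
    is_derive (fun s : C => g a b + s * d a b) (RtoC 0) (d a b)).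
  { intros g d a b. eapply is_derive_eq.
    apply (is_derive_plus (fun _ => g a b) (fun s => s * d a b)).
    apply is_derive_constC.
    apply (is_derive_mulC (fun s => s) (fun _ => d a b)).
    apply is_derive_idC. apply is_derive_constC.
    change (@eq C (Cplus (RtoC 0) (Cplus (Cmult (RtoC 1) (d a b)) (Cmult (RtoC 0) (RtoC 0)))) (d a b)). ring. }
  assert (E1 : G1 (RtoC 0) = g1).
  { apply functional_extensionality; intro a; apply functional_extensionality; intro b.
    unfold G1; ring. }
  assert (E2 : G2 (RtoC 0) = g2).
  { apply functional_extensionality; intro a; apply functional_extensionality; intro b.
    unfold G2; ring. }
  pose proof (ev_deriv e G1 G2 d1 d2 (RtoC 0) (HG g1 d1) (HG g2 d2)) as De.
  pose proof (ev_deriv f G1 G2 d1 d2 (RtoC 0) (HG g1 d1) (HG g2 d2)) as Df.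
  rewrite E1, E2 in De, Df.
  apply is_C_derive_unique in De. apply is_C_derive_unique in Df.
  rewrite <- De, <- Df. f_equal. apply functional_extensionality; intro s. apply H.
Qed.

Lemma eqv_dx e f : eqv e f -> eqv (dx e) (dx f).
Proof. intros H g1 g2. rewrite !ev_dx. apply eqv_evd, H. Qed.
Lemma eqv_dt e f : eqv e f -> eqv (dt e) (dt f).
Proof. intros H g1 g2. rewrite !ev_dt. apply eqv_evd, H. Qed.

Lemma comm_dxdt e : eqv (dx (dt e)) (dt (dx e)).
Proof.
  intros g1 g2. induction e; simpl; try reflexivity.
  - ring.
  - rewrite IHe1, IHe2; reflexivity.
  - rewrite IHe1, IHe2; reflexivity.
  - rewrite IHe1, IHe2; ring.
Qed.

Lemma dx_dtn a : forall e, eqv (dx (dtn a e)) (dtn a (dx e)).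
Proof.
  induction a; intros e g1 g2; simpl. reflexivity.
  rewrite comm_dxdt. apply eqv_dt. apply IHa.
Qed.

Definition env (V : nat -> nat -> C -> C -> C) (t x : C) : nat -> nat -> C :=
  fun a b => V a b t x.

Lemma ev_pdx U V1 V2 e t x :
  deriv_family U V1 -> deriv_family U V2 -> U t x ->
  is_derive (fun y => ev (env V1 t y) (env V2 t y) e) x (ev (env V1 t x) (env V2 t x) (dx e)).
Proof.
  intros F1 F2 Hu. rewrite ev_dx.
  apply (ev_deriv e (fun y => env V1 t y) (fun y => env V2 t y)).
  - intros a b. apply (proj1 (F1 a b)), Hu.
  - intros a b. apply (proj1 (F2 a b)), Hu.
Qed.

Lemma ev_pdt U V1 V2 e t x :
  deriv_family U V1 -> deriv_family U V2 -> U t x ->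
  is_derive (fun s => ev (env V1 s x) (env V2 s x) e) t (ev (env V1 t x) (env V2 t x) (dt e)).
Proof.
  intros F1 F2 Hu. rewrite ev_dt.
  apply (ev_deriv e (fun s => env V1 s x) (fun s => env V2 s x)).
  - intros a b. apply (proj2 (F1 a b)), Hu.
  - intros a b. apply (proj2 (F2 a b)), Hu.
Qed.

Definition Wf (V1 V2 : nat -> nat -> C -> C -> C) (e : ex) : nat -> nat -> C -> C -> C :=
  fun a b t x => ev (env V1 t x) (env V2 t x) (dtn a (dxn b e)).

Lemma Wf_family U V1 V2 e :
  deriv_family U V1 -> deriv_family U V2 -> deriv_family U (Wf V1 V2 e).
Proof.
  intros F1 F2 a b. split; intros t x Hu; unfold Wf.
  - eapply is_derive_eq. apply (ev_pdx U); assumption.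
    simpl. apply dx_dtn.
  - apply (ev_pdt U); assumption.
Qed.

Lemma open_loc U t x : open2 U -> U t x -> @locally (AbsRing_UniformSpace C_AbsRing) x (fun y => U t y).
Proof.
  intros HO Hu. destruct (HO t x Hu) as [eps [He H]].
  apply (@locally_le_locally_norm C_AbsRing (AbsRing_NormedModule C_AbsRing)).
  exists (mkposreal eps He). intros y Hy. apply H.
  - replace (t - t) with (RtoC 0) by ring. rewrite Cmod_0. exact He.
  - exact Hy.
Qed.

Lemma key_lemma U V1 V2 (W : nat -> nat -> C -> C -> C) R :
  open2 U -> deriv_family U V1 -> deriv_family U V2 -> deriv_family U W ->
  (forall t x, U t x -> W 1%nat O t x = ev (env V1 t x) (env V2 t x) R) ->
  forall b t x, U t x -> W 1%nat b t x = ev (env V1 t x) (env V2 t x) (dxn b R).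
Proof.
  intros HO F1 F2 FW H0 b. induction b; intros t x Hu. apply H0, Hu.
  simpl.
  pose proof (proj1 (FW 1%nat b) t x Hu) as D1.
  pose proof (ev_pdx U V1 V2 (dxn b R) t x F1 F2 Hu) as D2.
  apply (is_derive_ext_loc _ (fun y => W 1%nat b t y)) in D2.
  apply is_C_derive_unique in D1. apply is_C_derive_unique in D2.
  rewrite <- D1, <- D2. reflexivity.
  generalize (open_loc U t x HO Hu). apply filter_imp. intros y Hy.
  symmetry. apply IHb, Hy.
Qed.
Definition R1e : ex :=
  (Add (Add (Add (Add (Add (Add (Add (Add (Add (Add (Add (Add (Mul (Cst (RtoC (3))) (Mul (A2 0 2) Ex))
  (Mul (Cst (RtoC (-3))) (Mul (A2 0 1) (A2 0 2))))
  (Mul (Cst (RtoC (-1))) (A1 0 3)))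
  (Mul (Cst (RtoC (3))) (Mul (Mul (A1 0 2) (A2 0 0)) Ex)))
  (Mul (Cst (RtoC (-3))) (Mul (Mul (A1 0 2) (A2 0 0)) (A2 0 1))))
  (Mul (Cst (RtoC (12))) (Mul (Mul (A1 0 1) Ex) Ex)))
  (Mul (Cst (RtoC (-12))) (Mul (Mul (A1 0 1) (A2 0 1)) Ex)))
  (Mul (Cst (RtoC (-3))) (Mul (Mul (A1 0 1) (A2 0 0)) (A2 0 2))))
  (Mul (Cst (RtoC (-3))) (Mul (Mul (Mul (A1 0 1) (A1 0 2)) (A2 0 0)) (A2 0 0))))
  (Mul (Cst (RtoC (-15))) (Mul (Mul (Mul (A1 0 1) (A1 0 1)) (A2 0 0)) Ex)))
  (Mul (Cst (RtoC (3))) (Mul (Mul (Mul (A1 0 1) (A1 0 1)) (A2 0 0)) (A2 0 1))))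
  (Mul (Cst (RtoC (2))) (Mul (Mul (A1 0 1) (A1 0 1)) (A1 0 1))))
  (Mul (Cst (RtoC (3))) (Mul (Mul (Mul (Mul (A1 0 1) (A1 0 1)) (A1 0 1)) (A2 0 0)) (A2 0 0)))).

Definition R2e : ex :=
  (Add (Add (Add (Add (Add (Add (Add (Add (Add (Add (Add (Add (Add (Add (Add (Add (Add (Mul (Cst (RtoC (-1))) (A2 0 3))
  (Mul (Cst (RtoC (3))) (Mul (Mul (A2 0 1) Ex) Ex)))
  (Mul (Cst (RtoC (-6))) (Mul (Mul (A2 0 1) (A2 0 1)) Ex)))
  (Mul (Cst (RtoC (3))) (Mul (Mul (A2 0 1) (A2 0 1)) (A2 0 1))))
  (Mul (Cst (RtoC (-3))) (Mul (Mul (A2 0 0) (A2 0 2)) Ex)))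
  (Mul (Cst (RtoC (3))) (Mul (Mul (A2 0 0) (A2 0 1)) (A2 0 2))))
  (Mul (Cst (RtoC (-3))) (Mul (A1 0 2) Ex)))
  (Mul (Cst (RtoC (-3))) (Mul (Mul (Mul (A1 0 2) (A2 0 0)) (A2 0 0)) Ex)))
  (Mul (Cst (RtoC (3))) (Mul (Mul (Mul (A1 0 2) (A2 0 0)) (A2 0 0)) (A2 0 1))))
  (Mul (Cst (RtoC (-9))) (Mul (Mul (Mul (A1 0 1) (A2 0 0)) Ex) Ex)))
  (Mul (Cst (RtoC (9))) (Mul (Mul (Mul (A1 0 1) (A2 0 0)) (A2 0 1)) (A2 0 1))))
  (Mul (Cst (RtoC (3))) (Mul (Mul (Mul (A1 0 1) (A2 0 0)) (A2 0 0)) (A2 0 2))))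
  (Mul (Cst (RtoC (3))) (Mul (Mul (A1 0 1) (A1 0 2)) (A2 0 0))))
  (Mul (Cst (RtoC (3))) (Mul (Mul (Mul (Mul (A1 0 1) (A1 0 2)) (A2 0 0)) (A2 0 0)) (A2 0 0))))
  (Mul (Cst (RtoC (12))) (Mul (Mul (A1 0 1) (A1 0 1)) Ex)))
  (Mul (Cst (RtoC (3))) (Mul (Mul (A1 0 1) (A1 0 1)) (A2 0 1))))
  (Mul (Cst (RtoC (9))) (Mul (Mul (Mul (Mul (A1 0 1) (A1 0 1)) (A2 0 0)) (A2 0 0)) Ex)))
  (Mul (Cst (RtoC (6))) (Mul (Mul (Mul (Mul (A1 0 1) (A1 0 1)) (A2 0 0)) (A2 0 0)) (A2 0 1)))).

Definition u2e : ex := Sub (Add (A2 O 1) (Mul (A1 O 1) (A2 O O))) Ex.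
Definition u1e : ex := Add (Add (A1 O 2) (Mul (A1 O 1) (A1 O 1))) (Mul u2e u2e).

Definition R1f (j1 j2 : jet) : C := ev (fun _ b => j1 b) (fun _ b => j2 b) R1e.
Definition R2f (j1 j2 : jet) : C := ev (fun _ b => j1 b) (fun _ b => j2 b) R2e.

Lemma holo_ev (e : ex) (j1 j2 : jet) (k : nat) :
  ex_derive (fun z => ev (fun _ b => jupd j1 k z b) (fun _ b => j2 b) e) (j1 k) /\
  ex_derive (fun z => ev (fun _ b => j1 b) (fun _ b => jupd j2 k z b) e) (j2 k).
Proof.
  split; eexists.
  - apply (ev_deriv e (fun s _ b => jupd j1 k s b) (fun _ _ b => j2 b)
      (fun _ b => if Nat.eqb b k then RtoC 1 else RtoC 0) (fun _ _ => RtoC 0)).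
    + intros a b. unfold jupd. destruct (Nat.eqb b k). apply is_derive_idC. apply is_derive_constC.
    + intros a b. apply is_derive_constC.
  - apply (ev_deriv e (fun _ _ b => j1 b) (fun s _ b => jupd j2 k s b)
      (fun _ _ => RtoC 0) (fun _ b => if Nat.eqb b k then RtoC 1 else RtoC 0)).
    + intros a b. apply is_derive_constC.
    + intros a b. unfold jupd. destruct (Nat.eqb b k). apply is_derive_idC. apply is_derive_constC.
Qed.

Theorem mainTheorem10 :
  exists (N : nat) (D : jet -> jet -> Prop) (R1 R2 : jet -> jet -> C),
    evolution_system N D R1 R2 /\
    forall (U : C -> C -> Prop) (V1 V2 : nat -> nat -> C -> C -> C),
      is_solution D R1 R2 U V1 V2 ->
      KK_solution U (miura_u1 V1 V2) (miura_u2 V1 V2).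
Proof.
  exists 3%nat, (fun _ _ => True), R1f, R2f. split.
  - unfold evolution_system. split; [|split; [|split; [|split; [|split; [|split]]]]].
    + intros j1 j2 k1 k2 H.
      destruct (H 0%nat ltac:(lia)) as [a0 b0]. destruct (H 1%nat ltac:(lia)) as [a1 b1].
      destruct (H 2%nat ltac:(lia)) as [a2 b2]. destruct (H 3%nat ltac:(lia)) as [a3 b3].
      unfold R1f. cbn [ev R1e]. rewrite ?a0, ?a1, ?a2, ?a3, ?b0, ?b1, ?b2, ?b3. reflexivity.
    + intros j1 j2 k1 k2 H.
      destruct (H 0%nat ltac:(lia)) as [a0 b0]. destruct (H 1%nat ltac:(lia)) as [a1 b1].
      destruct (H 2%nat ltac:(lia)) as [a2 b2]. destruct (H 3%nat ltac:(lia)) as [a3 b3].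
      unfold R2f. cbn [ev R2e]. rewrite ?a0, ?a1, ?a2, ?a3, ?b0, ?b1, ?b2, ?b3. reflexivity.
    + intros j1 j2 k1 k2 _. tauto.
    + intros j1 j2 _. exists 1%R. split. lra. intros; exact I.
    + exists (fun _ => RtoC 0), (fun _ => RtoC 0). exact I.
    + intros j1 j2 _ k _. apply holo_ev.
    + intros j1 j2 _ k _. apply holo_ev.
  - intros U V1 V2 [HO [F1 [F2 HS]]].
    exists (Wf V1 V2 u1e), (Wf V1 V2 u2e).
    split; [apply Wf_family; assumption|].
    split; [apply Wf_family; assumption|].
    split; [intros; split; reflexivity|].
    intros t x Hu.
    assert (K1 : forall b t x, U t x -> V1 1%nat b t x = ev (env V1 t x) (env V2 t x) (dxn b R1e)).
    { apply (key_lemma U V1 V2 V1 R1e HO F1 F2 F1).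
      intros t' x' Hu'. exact (proj1 (proj2 (HS t' x' Hu'))). }
    assert (K2 : forall b t x, U t x -> V2 1%nat b t x = ev (env V1 t x) (env V2 t x) (dxn b R2e)).
    { apply (key_lemma U V1 V2 V2 R2e HO F1 F2 F2).
      intros t' x' Hu'. exact (proj2 (proj2 (HS t' x' Hu'))). }
    cbv zeta. unfold Wf. cbn [dtn dxn dt dx ev u1e u2e env].
    unfold env. rewrite (K1 0%nat t x Hu), (K1 1%nat t x Hu), (K1 2%nat t x Hu), (K2 0%nat t x Hu), (K2 1%nat t x Hu).
    cbn [dxn dx ev R1e R2e]. unfold env.
    split; ring.
Qed.
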